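(* Let $V$ and $Y$ be left and right canonical matrices, respectively, for $T$ at $\lambda_0$. Then $\Delta^{-1}VTY$ and $VTY\Delta^{-1}$ both belong to $\mathcal{H}_0^{r\times r}$ and are unimodular.
   Context: Let $\Omega\subset\mathbb{C}$ be open and $\lambda_0\in\Omega$ fixed. $\mathcal{H}$ denotes the ring of holomorphic functions on $\Omega$, and $\mathcal{H}_0$ the ring of functions holomorphic in some neighborhood of $\lambda_0$. Write $\chi_0(\lambda)=\lambda-\lambda_0$. A matrix $M\in\mathcal{H}_0^{n\times n}$ is unimodular if it has an inverse in $\mathcal{H}_0^{n\times n}$ (equivalently, $M(\lambda_0)$ is nonsingular). Throughout, $T\in\mathcal{H}^{n\times n}$ with $\det T$ not identically zero and $\det T(\lambda_0)=0$, and $r=\dim\ker T(\lambda_0)$. There exist unimodular $U_L,U_R\in\mathcal{H}_0^{n\times n}$ and uniquely determined integers $m_1\ge\cdots\ge m_n\ge 0$ (the partial multiplicities) with $U_LTU_R=\mathrm{diag}(\chi_0^{m_1},\dots,\chi_0^{m_n})$; $m_i>0$ exactly for $i\le r$. Set $\Delta=\mathrm{diag}(\chi_0^{m_1},\dots,\chi_0^{m_r})$. A root function for $T$ at $\lambda_0$ is $y\in\mathcal{H}^n$ with $y(\lambda_0)\neq0$ and $T(\lambda_0)y(\lambda_0)=0$; its multiplicity $\nu(y)$ is the order of the zero of $Ty$ at $\lambda_0$. A right canonical matrix for $T$ at $\lambda_0$ is $Y\in\mathcal{H}^{n\times r}$ whose columns $y_1,\dots,y_r$ are root functions such that (a) $y_1(\lambda_0),\dots,y_r(\lambda_0)$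 are linearly independent, (b) $\sum_{i=1}^r\nu(y_i)=\sum_{i=1}^r m_i$, (c) $\nu(y_1)\ge\cdots\ge\nu(y_r)$. A left root function is a row vector $v\in\mathcal{H}^{1\times n}$ with $v(\lambda_0)\ne0$ and $v(\lambda_0)T(\lambda_0)=0$, with multiplicity the order of the zero of $vT$ at $\lambda_0$; a left canonical matrix $V\in\mathcal{H}^{r\times n}$ is defined analogously. *)

(* Defs.v *)
(* The complex numbers are
   C := (R[i])^o for an arbitrary R : realType (R[i] from mathcomp-real-closed),
   viewed as a normed module over itself, so that [derivable f z 1] is
   complex differentiability at z. *)
From HB Require Import structures.
From mathcomp Require Import all_boot all_order all_algebra.
From mathcomp Require Import complex.
From mathcomp Require Import all_classical all_reals all_analysis.
Set Implicit Arguments. Unset Strict Implicit. Unset Printing Implicit Defensive.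
Import Order.TTheory GRing.Theory Num.Theory.
Local Open Scope ring_scope.
Local Open Scope classical_set_scope.

Notation CC R := ((R[i])^o).

Definition holo_at (R : realType) (p q : nat)
  (f : CC R -> 'M[CC R]_(p, q)) (z : CC R) : Prop :=
  forall i j, derivable (fun w => f w i j) z 1.

Definition holo_on (R : realType) (p q : nat) (Omega : set (CC R))
  (f : CC R -> 'M[CC R]_(p, q)) : Prop :=
  forall z, Omega z -> holo_at f z.

Definition holo_near (R : realType) (p q : nat) (lam0 : CC R)
  (f : CC R -> 'M[CC R]_(p, q)) : Prop :=
  \forall z \near lam0, holo_at f z.

Definition unimodular (R : realType) (n : nat) (lam0 : CC R)
  (M : CC R -> 'M[CC R]_n) : Prop :=
  holo_near lam0 M /\
  exists N : CC R -> 'M[CC R]_n, holo_near lam0 N /\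
    \forall z \near lam0, M z *m N z = 1%:M /\ N z *m M z = 1%:M.

Definition zero_order (R : realType) (p q : nat) (lam0 : CC R)
  (w : CC R -> 'M[CC R]_(p, q)) (k : nat) : Prop :=
  exists h : CC R -> 'M[CC R]_(p, q),
    holo_near lam0 h /\ h lam0 != 0 /\
    \forall z \near lam0, w z = (z - lam0) ^+ k *: h z.

(* Right canonical matrix Y (n x r) for T at lam0, given the partial
   multiplicities m 0 >= ... >= m (n-1) (0-indexed). Columns y_i of Y. *)
Definition right_canonical (R : realType) (n r : nat) (Omega : set (CC R))
  (lam0 : CC R) (T : CC R -> 'M[CC R]_n) (m : nat -> nat)
  (Y : CC R -> 'M[CC R]_(n, r)) : Prop :=
  holo_on Omega Y /\
  (forall i : 'I_r, col i (Y lam0) != 0 /\ T lam0 *m col i (Y lam0) = 0) /\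
  \rank (Y lam0) = r /\
  exists nu : 'I_r -> nat,
    (forall i : 'I_r, zero_order lam0 (fun z => T z *m col i (Y z)) (nu i)) /\
    (\sum_(i < r) nu i = \sum_(i < r) m i)%N /\
    (forall i j : 'I_r, (i <= j)%N -> (nu j <= nu i)%N).

Definition left_canonical (R : realType) (n r : nat) (Omega : set (CC R))
  (lam0 : CC R) (T : CC R -> 'M[CC R]_n) (m : nat -> nat)
  (V : CC R -> 'M[CC R]_(r, n)) : Prop :=
  holo_on Omega V /\
  (forall i : 'I_r, row i (V lam0) != 0 /\ row i (V lam0) *m T lam0 = 0) /\
  \rank (V lam0) = r /\
  exists nu : 'I_r -> nat,
    (forall i : 'I_r, zero_order lam0 (fun z => row i (V z) *m T z) (nu i)) /\
    (\sum_(i < r) nu i = \sum_(i < r) m i)%N /\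
    (forall i j : 'I_r, (i <= j)%N -> (nu j <= nu i)%N).

Definition powdiag (R : realType) (k : nat) (lam0 : CC R) (m : nat -> nat)
  (z : CC R) : 'M[CC R]_k :=
  diag_mx (\row_(i < k) (z - lam0) ^+ (m i)).

(* Main.v *)
Require Import Defs.
From HB Require Import structures.
From mathcomp Require Import all_boot all_order all_algebra.
From mathcomp Require Import complex.
From mathcomp Require Import fingroup perm.
From mathcomp Require Import all_classical all_reals all_analysis.
Import Order.TTheory GRing.Theory Num.Theory.
Local Open Scope ring_scope.
Local Open Scope classical_set_scope.
Lemma dM {R : realType} {f g : CC R -> CC R} {z} :
  derivable f z 1 -> derivable g z 1 -> derivable (fun w => f w * g w) z 1.
Proof. move=> hf hg; exact: (derivableM hf hg). Qed.
Lemma dD {R : realType} {f g : CC R -> CC R} {z} :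
  derivable f z 1 -> derivable g z 1 -> derivable (fun w => f w + g w) z 1.
Proof. move=> hf hg; exact: (derivableD hf hg). Qed.
Lemma dC {R : realType} (c : CC R) (z : CC R) : derivable (fun _ : CC R => c) z 1.
Proof. exact: (derivable_cst c z 1). Qed.
Lemma dId {R : realType} (z : CC R) : derivable (fun w : CC R => w) z 1.
Proof. exact: (@derivable_id _ _ z 1). Qed.
Lemma dV {R : realType} {f : CC R -> CC R} {z} :
  f z != 0 -> derivable f z 1 -> derivable (fun w => (f w)^-1) z 1.
Proof. move=> h1 h2; exact: (derivableV h1 h2). Qed.
Lemma dcont {R : realType} {f : CC R -> CC R} {z} :
  derivable f z 1 -> {for z, continuous f}.
Proof. move=> h; apply: (@differentiable_continuous _ _ _ z f); by apply/derivable1_diffP. Qed.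
Lemma dext {R : realType} {f g : CC R -> CC R} {z} :
  derivable f z 1 -> f = g -> derivable g z 1.
Proof. by move=> h <-. Qed.

Lemma dsum {R : realType} (I : Type) (s : seq I) (P : pred I)
  (F : I -> CC R -> CC R) z :
  (forall i, P i -> derivable (F i) z 1) ->
  derivable (fun w => \sum_(i <- s | P i) F i w) z 1.
Proof.
move=> hF; elim: s => [|a s IH].
  apply: (dext (dC 0 z)); apply/funext => w /=; by rewrite big_nil.
case Pa: (P a).
  apply: (dext (dD (hF a Pa) IH)); apply/funext => w /=; by rewrite big_cons Pa.
apply: (dext IH); apply/funext => w /=; by rewrite big_cons Pa.
Qed.

Lemma dprod {R : realType} (I : Type) (s : seq I) (P : pred I)
  (F : I -> CC R -> CC R) z :
  (forall i, P i -> derivable (F i) z 1) ->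
  derivable (fun w => \prod_(i <- s | P i) F i w) z 1.
Proof.
move=> hF; elim: s => [|a s IH].
  apply: (dext (dC 1 z)); apply/funext => w /=; by rewrite big_nil.
case Pa: (P a).
  apply: (dext (dM (hF a Pa) IH)); apply/funext => w /=; by rewrite big_cons Pa.
apply: (dext IH); apply/funext => w /=; by rewrite big_cons Pa.
Qed.

Lemma dX {R : realType} {f : CC R -> CC R} {z} k :
  derivable f z 1 -> derivable (fun w => f w ^+ k) z 1.
Proof.
move=> hf; elim: k => [|k IH].
  apply: (dext (dC 1 z)); apply/funext => w /=; by rewrite expr0.
apply: (dext (dM hf IH)); apply/funext => w /=; by rewrite exprS.
Qed.

Lemma dchi {R : realType} (l z : CC R) k : derivable (fun w => (w - l) ^+ k) z 1.
Proof.
apply: dX; exact: (dD (dId z) (dC (- l) z)).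
Qed.

Lemma hext {R : realType} {p q} {f g : CC R -> 'M[CC R]_(p, q)} {z} :
  holo_at f z -> f = g -> holo_at g z.
Proof. by move=> h <-. Qed.

Lemma hmul {R : realType} {p q s} {f : CC R -> 'M[CC R]_(p, q)}
  {g : CC R -> 'M[CC R]_(q, s)} {z} :
  holo_at f z -> holo_at g z -> holo_at (fun w => f w *m g w) z.
Proof.
move=> hf hg i j.
have -> : (fun w => (f w *m g w) i j) = (fun w => \sum_k f w i k * g w k j).
  by apply/funext => w; rewrite mxE.
apply: dsum => k _; exact: (dM (hf i k) (hg k j)).
Qed.

Lemma hadd {R : realType} {p q} {f g : CC R -> 'M[CC R]_(p, q)} {z} :
  holo_at f z -> holo_at g z -> holo_at (fun w => f w + g w) z.
Proof.
move=> hf hg i j.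
have -> : (fun w => (f w + g w) i j) = (fun w => f w i j + g w i j).
  by apply/funext => w; rewrite mxE.
exact: (dD (hf i j) (hg i j)).
Qed.

Lemma hscale {R : realType} {p q} {c : CC R -> CC R} {f : CC R -> 'M[CC R]_(p, q)} {z} :
  derivable c z 1 -> holo_at f z -> holo_at (fun w => c w *: f w) z.
Proof.
move=> hc hf i j.
have -> : (fun w => (c w *: f w) i j) = (fun w => c w * f w i j).
  by apply/funext => w; rewrite mxE.
exact: (dM hc (hf i j)).
Qed.

Lemma hcst {R : realType} {p q} (A : 'M[CC R]_(p, q)) (z : CC R) :
  holo_at (fun _ => A) z.
Proof. move=> i j; exact: dC. Qed.

Lemma htr {R : realType} {p q} {f : CC R -> 'M[CC R]_(p, q)} {z} :
  holo_at f z -> holo_at (fun w => (f w)^T) z.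
Proof.
move=> hf i j.
have -> : (fun w => (f w)^T i j) = (fun w => f w j i).
  by apply/funext => w; rewrite mxE.
exact: (hf _ _).
Qed.

Lemma hrow {R : realType} {p q} (i0 : 'I_p) {f : CC R -> 'M[CC R]_(p, q)} {z} :
  holo_at f z -> holo_at (fun w => row i0 (f w)) z.
Proof.
move=> hf i j.
have -> : (fun w => row i0 (f w) i j) = (fun w => f w i0 j).
  by apply/funext => w; rewrite mxE.
exact: (hf _ _).
Qed.

Lemma hcol {R : realType} {p q} (j0 : 'I_q) {f : CC R -> 'M[CC R]_(p, q)} {z} :
  holo_at f z -> holo_at (fun w => col j0 (f w)) z.
Proof.
move=> hf i j.
have -> : (fun w => col j0 (f w) i j) = (fun w => f w i j0).
  by apply/funext => w; rewrite mxE.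
exact: (hf _ _).
Qed.

Lemma hpowdiag {R : realType} k (l : CC R) (m : nat -> nat) (z : CC R) :
  holo_at (powdiag k l m) z.
Proof.
move=> i j.
have -> : (fun w => powdiag k l m w i j) = (fun w => (w - l) ^+ m i *+ (i == j)).
  by apply/funext => w; rewrite /powdiag !mxE.
case: (i == j).
  by apply: (dext (dchi l z (m i))); apply/funext => w.
by apply: (dext (dC 0 z)); apply/funext => w.
Qed.

Lemma ddet {R : realType} {p} {f : CC R -> 'M[CC R]_p} {z} :
  holo_at f z -> derivable (fun w => \det (f w)) z 1.
Proof.
move=> hf.
have -> : (fun w => \det (f w)) =
   (fun w => \sum_(s : 'S_p) ((-1) ^+ s * \prod_i f w i (s i))).
  by apply/funext => w.
apply: dsum => s _; apply: (dM (dC _ z)).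
apply: dprod => i _; exact: (hf _ _).
Qed.

Lemma hadj {R : realType} {p} {f : CC R -> 'M[CC R]_p} {z} :
  holo_at f z -> holo_at (fun w => \adj (f w)) z.
Proof.
move=> hf i j.
have -> : (fun w => \adj (f w) i j) =
   (fun w => (-1) ^+ (j + i) * \det (row' j (col' i (f w)))).
  by apply/funext => w; rewrite mxE.
apply: (dM (dC _ z)).
apply: ddet => a b.
have -> : (fun w => row' j (col' i (f w)) a b) = (fun w => f w (lift j a) (lift i b)).
  by apply/funext => w; rewrite !mxE.
exact: (hf _ _).
Qed.

Lemma agree {R : realType} {f h : CC R -> CC R} {l : CC R} :
  {for l, continuous f} -> {for l, continuous h} ->
  (\forall z \near l^', f z = h z) -> f l = h l.
Proof.
move=> cf ch E.
have F1 : f @ l^' --> f l := (continuous_withinNx f l).1 cf.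
have H1 : h @ l^' --> h l := (continuous_withinNx h l).1 ch.
have F2 : f @ l^' --> h l.
  apply: cvg_trans H1. apply: near_eq_cvg.
  by apply: filterS E => z ->.
exact: (@cvg_unique _ (@norm_hausdorff _ (CC R)) _ _ _ _ F1 F2).
Qed.

Lemma OC {R : realType} {f g : CC R -> CC R} {l : CC R} (a b : nat) :
  derivable f l 1 -> derivable g l 1 -> (a <= b)%N ->
  (\forall z \near l, (z - l) ^+ a * f z = (z - l) ^+ b * g z) ->
  f l = 0 ^+ (b - a) * g l.
Proof.
move=> hf hg hab E.
have dh := dM (dchi l l (b - a)) hg.
have := agree (dcont hf) (dcont dh).
rewrite subrr => -> //.
rewrite near_withinE; apply: filterS E => z Ez /= zl.
have zl0 : (z - l) ^+ a != 0 by rewrite expf_neq0 // subr_eq0.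
apply: (mulfI zl0); rewrite Ez mulrA -exprD subnKC //.
Qed.

Lemma hnear_mul {R : realType} {p q s} {l : CC R} {f : CC R -> 'M[CC R]_(p, q)}
  {g : CC R -> 'M[CC R]_(q, s)} :
  holo_near l f -> holo_near l g -> holo_near l (fun w => f w *m g w).
Proof. move=> hf hg; apply: filterS2 hf hg => z; exact: hmul. Qed.

Lemma hnear_tr {R : realType} {p q} {l : CC R} {f : CC R -> 'M[CC R]_(p, q)} :
  holo_near l f -> holo_near l (fun w => (f w)^T).
Proof. move=> hf; apply: filterS hf => z; exact: htr. Qed.

Lemma hnear_on {R : realType} {p q} (Omega : set (CC R)) {l : CC R}
  {f : CC R -> 'M[CC R]_(p, q)} :
  open Omega -> Omega l -> holo_on Omega f -> holo_near l f.
Proof.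
move=> oO Ol hf.
have hO : nbhs l Omega := @open_nbhs_nbhs _ l Omega (conj oO Ol).
by apply: filterS hO => z /hf.
Qed.

Lemma unimod_det {R : realType} {p} {l : CC R} {M : CC R -> 'M[CC R]_p} :
  holo_near l M -> \det (M l) != 0 -> unimodular l M.
Proof.
move=> hM hdet; split => //.
have hd : derivable (fun w => \det (M w)) l 1 := ddet (nbhs_singleton hM).
have nz : \forall z \near l, \det (M z) != 0 := cvgr_neq0 _ (dcont hd) hdet.
exists (fun z => (\det (M z))^-1 *: \adj (M z)); split.
  near=> z.
  have hz : holo_at M z by near: z; exact: hM.
  have dz : \det (M z) != 0 by near: z; exact: nz.
  apply: hscale.
    exact: (dV dz (ddet hz)).
  exact: (hadj hz).
near=> z.
have dz : \det (M z) != 0 by near: z; exact: nz.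
split.
  by rewrite -scalemxAr mul_mx_adj scale_scalar_mx mulVf.
by rewrite -scalemxAl mul_adj_mx scale_scalar_mx mulVf.
Unshelve. all: by end_near.
Qed.

Lemma unimod_tr {R : realType} {p} {l : CC R} {M : CC R -> 'M[CC R]_p} :
  unimodular l M -> unimodular l (fun z => (M z)^T).
Proof.
case=> hM [N [hN E]]; split; first exact: hnear_tr.
exists (fun z => (N z)^T); split; first exact: hnear_tr.
apply: filterS E => z [E1 E2].
by rewrite -!trmx_mul E1 E2 trmx1.
Qed.

Lemma sum_eq_le (r : nat) (g h : 'I_r -> nat) :
  (forall i, (g i <= h i)%N) -> (\sum_i g i = \sum_i h i)%N -> forall i, g i = h i.
Proof.
move=> le E.
have : (\sum_i (h i - g i) == 0)%N by rewrite sumnB // E subnn.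
rewrite sum_nat_eq0 => /forallP H i.
have := H i; rewrite implyTb subn_eq0 => hi.
by apply/eqP; rewrite eqn_leq le hi.
Qed.

Lemma perm_le_eq (r : nat) (s : 'S_r) (f : 'I_r -> nat) :
  (forall i, (f i <= f (s i))%N) -> forall i, f (s i) = f i.
Proof.
move=> le.
have E : (\sum_i f i = \sum_i f (s i))%N by rewrite (reindex_inj (@perm_inj _ s)).
move=> i; exact: (esym (@sum_eq_le r f (fun i => f (s i)) le E i)).
Qed.

Lemma perm_ge_eq (r : nat) (s : 'S_r) (f : 'I_r -> nat) :
  (forall i, (f (s i) <= f i)%N) -> forall i, f (s i) = f i.
Proof.
move=> le.
have E : (\sum_i f (s i) = \sum_i f i)%N by rewrite [RHS](reindex_inj (@perm_inj _ s)).
move=> i; exact: (@sum_eq_le r (fun i => f (s i)) f le E i).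
Qed.

Lemma sorted_perm_eq (r : nat) (s : 'S_r) (nu mm : 'I_r -> nat) :
  (forall i, nu i = mm (s i)) ->
  (forall i j : 'I_r, (i <= j)%N -> (nu j <= nu i)%N) ->
  (forall i j : 'I_r, (i <= j)%N -> (mm j <= mm i)%N) ->
  forall i, nu i = mm i.
Proof.
move=> E snu smm.
have so : sorted (relpre val ltn) (enum 'I_r).
  by rewrite -sorted_map val_enum_ord iota_ltn_sorted.
have Hnu : sorted (fun a b => b <= a)%N (map nu (enum 'I_r)).
  apply: (@homo_sorted _ _ nu (relpre val ltn) (fun a b => (b <= a)%N) _ _ so) => a b /= ab; apply: snu; exact: ltnW.
have Hmm : sorted (fun a b => b <= a)%N (map mm (enum 'I_r)).
  apply: (@homo_sorted _ _ mm (relpre val ltn) (fun a b => (b <= a)%N) _ _ so) => a b /= ab; apply: smm; exact: ltnW.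
have P : perm_eq (map nu (enum 'I_r)) (map mm (enum 'I_r)).
  have -> : map nu (enum 'I_r) = map mm (map s (enum 'I_r)).
    elim: (enum 'I_r) => //= a l ->; by rewrite E.
  apply: perm_map; apply: uniq_perm.
  - by rewrite map_inj_uniq ?enum_uniq //; exact: perm_inj.
  - exact: enum_uniq.
  move=> x; rewrite mem_enum; apply/mapP; exists (s^-1 x)%g; first by rewrite mem_enum.
  by rewrite permKV.
have EQ := sorted_eq (fun b a c (h1 : (b <= a)%N) (h2 : (c <= b)%N) => leq_trans h2 h1)
   (fun a b (h : ((b <= a) && (a <= b))%N) => esym (anti_leq h)) Hnu Hmm P.
move=> i; have H := (iffRL (eq_in_map _ _ _) EQ); apply: H; by rewrite mem_enum.
Qed.

Lemma det_cmp {K : comRingType} (r : nat) (A C : 'M[K]_r) (f : 'I_r -> nat) :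
  (forall i k, (f k < f i)%N -> A i k = 0) ->
  (forall i k, (f i < f k)%N -> C i k = 0) ->
  (forall i k, f i = f k -> A i k = C i k) -> \det A = \det C.
Proof.
move=> HA HC HE; apply: eq_bigr => s _; congr (_ * _).
case: (boolP [forall i, f (s i) == f i]) => [/forallP all_eq|].
  by apply: eq_bigr => i _; apply: HE; apply/esym/eqP/all_eq.
move=> neq.
have [i hi] : exists i, (f (s i) < f i)%N.
  apply/not_existsP => H; move/negP: neq; apply; apply/forallP => i0.
  apply/eqP; apply: (@perm_le_eq r s f) => j.
  by move: (H j); rewrite ltnNge => /negP/negbNE.
have [j hj] : exists j, (f j < f (s j))%N.
  apply/not_existsP => H; move/negP: neq; apply; apply/forallP => i0.
  apply/eqP; apply: (@perm_ge_eq r s f) => k.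
  by move: (H k); rewrite ltnNge => /negP/negbNE.
rewrite (bigD1 i) //= HA // mul0r.
by rewrite (bigD1 j) //= HC // mul0r.
Qed.

Lemma row_entry {K : Type} (p s : nat) (X : 'M[K]_(p, s)) i k : row i X 0 k = X i k.
Proof. by rewrite mxE. Qed.
Lemma scale_entry {K : pzRingType} (p s : nat) (a : K) (X : 'M[K]_(p, s)) i k :
  (a *: X) i k = a * X i k.
Proof. by rewrite mxE. Qed.
Lemma diag_entry {K : pzRingType} (p s : nat) (X : 'M[K]_(p, s)) (d : 'rV[K]_s) i k :
  (X *m diag_mx d) i k = X i k * d 0 k.
Proof. by rewrite mul_mx_diag mxE. Qed.
Lemma diagl_entry {K : pzRingType} (p s : nat) (X : 'M[K]_(p, s)) (d : 'rV[K]_p) i k :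
  (diag_mx d *m X) i k = d 0 i * X i k.
Proof. by rewrite mul_diag_mx mxE. Qed.
Lemma rowf_entry {K : Type} (s : nat) (f : 'I_s -> K) k : (\row_j f j) 0 k = f k.
Proof. by rewrite mxE. Qed.

Lemma det_perm {K : idomainType} (r : nat) (A : 'M[K]_r) :
  \det A != 0 -> exists s : 'S_r, \prod_i A i (s i) != 0.
Proof.
move=> h; apply/not_existsP => H; move/eqP: h; apply.
apply: big1 => s _.
have /negP := H s; rewrite negbK => /eqP ->; by rewrite mulr0.
Qed.

Lemma rank_unitl {K : fieldType} (p s : nat) (U : 'M[K]_p) (X : 'M[K]_(p, s)) :
  U \in unitmx -> \rank (U *m X) = \rank X.
Proof.
move=> hU; apply/eqP; rewrite eqn_leq mxrankM_maxr /=.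
have e : invmx U *m (U *m X) = X by rewrite mulmxA mulVmx // mul1mx.
by rewrite -{1}e mxrankM_maxr.
Qed.

Lemma rank_unitr {K : fieldType} (p s : nat) (U : 'M[K]_s) (X : 'M[K]_(p, s)) :
  U \in unitmx -> \rank (X *m U) = \rank X.
Proof. move=> hU; apply: mxrankMfree; by rewrite row_free_unit. Qed.

Lemma core {R : realType} (lam0 : CC R) (r q : nat)
  (T UL UR : CC R -> 'M[CC R]_(r + q)) (m : nat -> nat)
  (V : CC R -> 'M[CC R]_(r, r + q)) (Y : CC R -> 'M[CC R]_(r + q, r))
  (nu : 'I_r -> nat) :
  (forall k : 'I_q, m (r + k)%N = 0%N) ->
  (forall i j : 'I_r, (i <= j)%N -> (m j <= m i)%N) ->
  unimodular lam0 UL -> unimodular lam0 UR ->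
  (\forall z \near lam0, UL z *m T z *m UR z = powdiag (r + q) lam0 m z) ->
  holo_near lam0 V -> holo_near lam0 Y ->
  V lam0 *m T lam0 = 0 -> T lam0 *m Y lam0 = 0 ->
  \rank (V lam0) = r -> \rank (Y lam0) = r ->
  (forall i : 'I_r, zero_order lam0 (fun z => row i (V z) *m T z) (nu i)) ->
  (\sum_(i < r) nu i = \sum_(i < r) m i)%N ->
  (forall i j : 'I_r, (i <= j)%N -> (nu j <= nu i)%N) ->
  exists M : CC R -> 'M[CC R]_r, unimodular lam0 M /\
    \forall z \near lam0^', M z = invmx (powdiag r lam0 m z) *m (V z *m T z *m Y z).
Proof.
move=> hm0 hm hUL hUR hS hV hY hV0 hY0 hVr hYr hnu hsum hsort.
case: hUL => hULh [ULi [hULih EUL]].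
case: hUR => hURh [URi [hURih EUR]].
have CH := @choice 'I_r (CC R -> 'M[CC R]_(1, r + q))
  (fun i h => holo_near lam0 h /\ h lam0 != 0 /\
     \forall z \near lam0, row i (V z) *m T z = (z - lam0) ^+ nu i *: h z) hnu.
pose H := projT1 CH. have hH := projT2 CH. rewrite -/H in hH.
have hHh : \forall z \near lam0, forall i, holo_at (H i) z.
  apply: (@filter_forall _ _ (fun i z => holo_at (H i) z) (nbhs lam0) _) => i.
  by case: (hH i).
have hHe : \forall z \near lam0, forall i,
    row i (V z) *m T z = (z - lam0) ^+ nu i *: H i z.
  apply: (@filter_forall _ _ (fun i z => row i (V z) *m T z = (z - lam0) ^+ nu i *: H i z) (nbhs lam0) _) => i.
  by case: (hH i) => _ [].
pose Hm z := \matrix_(i < r) H i z.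
have hHmh : holo_near lam0 Hm.
  apply: filterS hHh => z hz i j.
  have -> : (fun w => Hm w i j) = (fun w => H i w 0 j).
    by apply/funext => w; rewrite mxE.
  exact: (hz i 0 j).
pose D := powdiag (r + q) lam0 m.
pose A z := V z *m ULi z.
pose B z := URi z *m Y z.
pose Cm z := Hm z *m UR z.
have N1 : \forall z \near lam0, T z *m UR z = ULi z *m D z.
  near=> z.
  have [E1 E2] : UL z *m ULi z = 1%:M /\ ULi z *m UL z = 1%:M by near: z; exact: EUL.
  have S : UL z *m T z *m UR z = D z by near: z; exact: hS.
  by rewrite -S !mulmxA E2 mul1mx.
have N2 : \forall z \near lam0, UL z *m T z = D z *m URi z.
  near=> z.
  have [E1 E2] : UR z *m URi z = 1%:M /\ URi z *m UR z = 1%:M by near: z; exact: EUR.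
  have S : UL z *m T z *m UR z = D z by near: z; exact: hS.
  by rewrite -S -!mulmxA E1 mulmx1.
have N3 : \forall z \near lam0, forall (i : 'I_r) (k : 'I_(r + q)),
    (z - lam0) ^+ m k * A z i k = (z - lam0) ^+ nu i * Cm z i k.
  near=> z => i k.
  have e1 : T z *m UR z = ULi z *m D z by near: z; exact: N1.
  have he : row i (V z) *m T z = (z - lam0) ^+ nu i *: H i z.
    by move: i; near: z; exact: hHe.
  have R1 : row i (A z *m D z) = (z - lam0) ^+ nu i *: row i (Cm z).
    rewrite /A -mulmxA -e1 mulmxA row_mul row_mul he -scalemxAl.
    by rewrite /Cm row_mul rowK.
  have R2 : row i (A z *m D z) 0 k = ((z - lam0) ^+ nu i *: row i (Cm z)) 0 k.
    by rewrite R1.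
  rewrite row_entry scale_entry row_entry in R2.
  by rewrite -R2 /D /powdiag diag_entry rowf_entry mulrC.
have [EUL1 EUL2] := nbhs_singleton EUL.
have [EUR1 EUR2] := nbhs_singleton EUR.
have N10 := nbhs_singleton N1.
have N20 := nbhs_singleton N2.
have uULi : ULi lam0 \in unitmx := (mulmx1_unit EUL2).1.
have uURi : URi lam0 \in unitmx := (mulmx1_unit EUR2).1.
have Z1 : A lam0 *m D lam0 = 0 by rewrite /A -mulmxA -N10 mulmxA hV0 mul0mx.
have Z1' : forall i (k : 'I_q), A lam0 i (rshift r k) = 0.
  move=> i k.
  have e : (A lam0 *m D lam0) i (rshift r k) = 0 by rewrite Z1 mxE.
  by rewrite /D /powdiag diag_entry rowf_entry /= hm0 expr0 mulr1 in e.
have Z2 : D lam0 *m B lam0 = 0 by rewrite /B mulmxA -N20 -mulmxA hY0 mulmx0.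
have Z2' : forall (k : 'I_q) j, B lam0 (rshift r k) j = 0.
  move=> k j.
  have e : (D lam0 *m B lam0) (rshift r k) j = 0 by rewrite Z2 mxE.
  by rewrite /D /powdiag diagl_entry rowf_entry /= hm0 expr0 mul1r in e.
have rA : \rank (A lam0) = r by rewrite /A rank_unitr.
have rB : \rank (B lam0) = r by rewrite /B rank_unitl.
pose A1 := lsubmx (A lam0).
have EA : A lam0 = A1 *m row_mx 1%:M 0.
  rewrite mul_mx_row mulmx1 mulmx0 -{1}(hsubmxK (A lam0)); congr row_mx.
  apply/matrixP => i k; rewrite mxE Z1'; by rewrite mxE.
have uA1 : A1 \in unitmx.
  rewrite -row_free_unit /row_free eqn_leq rank_leq_row /= -{1}rA EA.
  exact: mxrankM_maxl.
pose B1 := usubmx (B lam0).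
have EB : B lam0 = col_mx 1%:M 0 *m B1.
  rewrite mul_col_mx mul1mx mul0mx -{1}(vsubmxK (B lam0)); congr col_mx.
  apply/matrixP => k j; rewrite mxE Z2'; by rewrite mxE.
have uB1 : B1 \in unitmx.
  rewrite -row_free_unit /row_free eqn_leq rank_leq_row /= -{1}rB EB.
  exact: mxrankM_maxr.
have hA0 : holo_at A lam0 := hmul (nbhs_singleton hV) (nbhs_singleton hULih).
have hC0 : holo_at Cm lam0 := hmul (nbhs_singleton hHmh) (nbhs_singleton hURh).
have [s hs] : exists s : 'S_r, \prod_i A1 i (s i) != 0.
  by apply: det_perm; rewrite -unitfE -unitmxE.
have hle : forall i, (nu i <= m (s i))%N.
  move=> i; rewrite leqNgt; apply/negP => lt.
  have N3' : \forall z \near lam0, (z - lam0) ^+ m (s i) * A z i (lshift q (s i)) =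
      (z - lam0) ^+ nu i * Cm z i (lshift q (s i)).
    by apply: filterS N3 => z /(_ i (lshift q (s i))).
  have := OC (m (s i)) (nu i) (hA0 i (lshift q (s i))) (hC0 i (lshift q (s i))) (ltnW lt) N3'.
  rewrite expr0n subn_eq0 leqNgt lt /= mul0r => h0.
  move/prodf_neq0: hs => /(_ i isT); by rewrite mxE h0 eqxx.
have hnus : forall i, nu i = m (s i).
  apply: (@sum_eq_le r nu (fun i => m (s i)) hle).
  by rewrite hsum (reindex_inj (@perm_inj _ s)).
have hnm : forall i : 'I_r, nu i = m i.
  apply: (@sorted_perm_eq r s nu (fun i : 'I_r => m i) hnus hsort).
  exact: hm.
pose M z := Hm z *m Y z.
have hMh : holo_near lam0 M := hnear_mul hHmh hY.
have EM0 : M lam0 = Cm lam0 *m B lam0.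
  by rewrite /M /Cm /B !mulmxA -(mulmxA (Hm lam0)) EUR1 mulmx1.
pose C1 := lsubmx (Cm lam0).
have EC : Cm lam0 *m B lam0 = C1 *m B1.
  by rewrite EB mulmxA -{1}(hsubmxK (Cm lam0)) mul_row_col mulmx1 mulmx0 addr0.
have dC1 : \det A1 = \det C1.
  apply: (@det_cmp _ r A1 C1 (fun i : 'I_r => m i)).
  - move=> i k lt; rewrite mxE.
    have E : \forall z \near lam0, (z - lam0) ^+ m k * A z i (lshift q k) =
        (z - lam0) ^+ m i * Cm z i (lshift q k).
      by apply: filterS N3 => z /(_ i (lshift q k)); rewrite hnm.
    have := OC (m k) (m i) (hA0 i (lshift q k)) (hC0 i (lshift q k)) (ltnW lt) E.
    by rewrite expr0n subn_eq0 leqNgt lt /= mul0r.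
  - move=> i k lt; rewrite mxE.
    have E : \forall z \near lam0, (z - lam0) ^+ m i * Cm z i (lshift q k) =
        (z - lam0) ^+ m k * A z i (lshift q k).
      by apply: filterS N3 => z /(_ i (lshift q k)); rewrite hnm => e; rewrite e.
    have := OC (m i) (m k) (hC0 i (lshift q k)) (hA0 i (lshift q k)) (ltnW lt) E.
    by rewrite expr0n subn_eq0 leqNgt lt /= mul0r.
  - move=> i k eik; rewrite mxE [RHS]mxE.
    have E : \forall z \near lam0, (z - lam0) ^+ m k * A z i (lshift q k) =
        (z - lam0) ^+ m i * Cm z i (lshift q k).
      by apply: filterS N3 => z /(_ i (lshift q k)); rewrite hnm.
    have le : (m k <= m i)%N by rewrite eik.
    have := OC (m k) (m i) (hA0 i (lshift q k)) (hC0 i (lshift q k)) le E.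
    by rewrite eik subnn expr0 mul1r.
have dM0 : \det (M lam0) != 0.
  have dA1 : \det A1 != 0 by rewrite -unitfE -unitmxE.
  have dB1 : \det B1 != 0 by rewrite -unitfE -unitmxE.
  by rewrite EM0 EC det_mulmx -dC1 mulf_neq0.
exists M; split; first exact: unimod_det hMh dM0.
rewrite near_withinE; near=> z => zl.
have he : forall i, row i (V z) *m T z = (z - lam0) ^+ nu i *: H i z.
  by near: z; exact: hHe.
have EVT : V z *m T z = powdiag r lam0 m z *m Hm z.
  apply/row_matrixP => i; rewrite row_mul he hnm /powdiag row_mul row_diag_mx.
  by rewrite -scalemxAl -rowE rowK mxE.
have uD : powdiag r lam0 m z \in unitmx.
  rewrite unitmxE unitfE /powdiag det_diag; apply/prodf_neq0 => i _.
  by rewrite mxE expf_neq0 // subr_eq0.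
by rewrite EVT -mulmxA (mulKmx uD).
Unshelve. all: by end_near.
Qed.

Lemma find_zero (n : nat) (m : nat -> nat) :
  (forall i j, (i <= j)%N -> (j < n)%N -> (m j <= m i)%N) ->
  let p := find (fun k => m k == 0%N) (iota 0 n) in
  (p <= n)%N /\ forall k, (k < n)%N -> (m k == 0%N) = (p <= k)%N.
Proof.
move=> hm p; have pn : (p <= n)%N by have := find_size (fun k => m k == 0%N) (iota 0 n); rewrite size_iota.
split => // k kn.
case: (leqP p k) => pk.
  have pn' : (p < n)%N by exact: leq_ltn_trans pk kn.
  have : m (nth 0%N (iota 0 n) p) == 0%N.
    apply: (@nth_find _ 0%N (fun k => m k == 0%N)).
    by rewrite has_find size_iota.
  rewrite nth_iota // add0n => /eqP mp0.
  by have := hm p k pk kn; rewrite mp0 leqn0.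
have := @before_find _ 0%N (fun k => m k == 0%N) (iota 0 n) k pk.
by rewrite nth_iota // add0n => ->.
Qed.

Lemma rank_powdiag {R : realType} (n : nat) (lam0 : CC R) (m : nat -> nat) :
  (forall i j, (i <= j)%N -> (j < n)%N -> (m j <= m i)%N) ->
  forall k, (n - \rank (powdiag n lam0 m lam0) <= k)%N -> (k < n)%N -> m k = 0%N.
Proof.
move=> hm; have [pn hp] := find_zero n m hm.
set p := find _ _ in pn hp.
have -> : powdiag n lam0 m lam0 = copid_mx p.
  apply/matrixP => i j; rewrite /powdiag /copid_mx !mxE subrr expr0n.
  have := hp i (ltn_ord i) => hi.
  case: (eqVneq i j) => [<-|nij].
    rewrite eqxx /= mulr1n; case: (leqP p i) => pi.
      by move: hi; rewrite pi => /eqP ->; rewrite eqxx subr0.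
    move: hi; rewrite leqNgt pi /= => ->; by rewrite subrr.
  have nij' : (i == j :> nat) = false by apply/negbTE.
  by rewrite nij' /= mulr0n subrr.
rewrite rank_copid_mx // subKn // => k pk kn.
by apply/eqP; rewrite hp.
Qed.

Lemma zero_order_tr {R : realType} (p s : nat) (lam0 : CC R)
  (w : CC R -> 'M[CC R]_(p, s)) k :
  zero_order lam0 w k -> zero_order lam0 (fun z => (w z)^T) k.
Proof.
case=> h [hh [h0 E]]; exists (fun z => (h z)^T); split; first exact: hnear_tr.
split; first by rewrite trmx_eq0.
by apply: filterS E => z ->; rewrite linearZ.
Qed.
Theorem mainTheorem7 (R : realType) (Omega : set (CC R)) (lam0 : CC R)
  (n : nat) (T : CC R -> 'M[CC R]_n)
  (hOmega : open Omega) (hlam0 : Omega lam0)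
  (hT : holo_on Omega T)
  (hdet : exists z, Omega z /\ \det (T z) != 0)
  (hdet0 : \det (T lam0) = 0)
  (r : nat) (hr : r = (n - \rank (T lam0))%N)
  (m : nat -> nat) (UL UR : CC R -> 'M[CC R]_n)
  (hm : forall i j, (i <= j)%N -> (j < n)%N -> (m j <= m i)%N)
  (hUL : unimodular lam0 UL) (hUR : unimodular lam0 UR)
  (hsmith : \forall z \near lam0, UL z *m T z *m UR z = powdiag n lam0 m z)
  (V : CC R -> 'M[CC R]_(r, n)) (Y : CC R -> 'M[CC R]_(n, r))
  (hV : left_canonical Omega lam0 T m V)
  (hY : right_canonical Omega lam0 T m Y) :
  (exists M : CC R -> 'M[CC R]_r,
     unimodular lam0 M /\
     \forall z \near lam0^',
        M z = invmx (powdiag r lam0 m z) *m (V z *m T z *m Y z)) /\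
  (exists M : CC R -> 'M[CC R]_r,
     unimodular lam0 M /\
     \forall z \near lam0^',
        M z = (V z *m T z *m Y z) *m invmx (powdiag r lam0 m z)).
Proof.
have rTD : \rank (T lam0) = \rank (powdiag n lam0 m lam0).
  case: hUL => _ [ULi [_ EUL]]; case: hUR => _ [URi [_ EUR]].
  have [_ EUL2] := nbhs_singleton EUL.
  have [EUR1 _] := nbhs_singleton EUR.
  have uUL : UL lam0 \in unitmx := (mulmx1_unit EUL2).2.
  have uUR : UR lam0 \in unitmx := (mulmx1_unit EUR1).1.
  by rewrite -(nbhs_singleton hsmith) rank_unitr // rank_unitl.
have hm0' : forall k, (r <= k)%N -> (k < n)%N -> m k = 0%N.
  move=> k rk kn; apply: (@rank_powdiag R n lam0 m hm k _ kn).
  by rewrite -rTD -hr.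
have [q hq] : exists q, n = (r + q)%N.
  by exists (n - r)%N; rewrite subnKC // hr leq_subr.
subst n.
have hm0 : forall k : 'I_q, m (r + k)%N = 0%N.
  by move=> k; apply: hm0'; rewrite ?leq_addr // ltn_add2l.
have hmr : forall i j : 'I_r, (i <= j)%N -> (m j <= m i)%N.
  move=> i j ij; apply: hm ij _.
  exact: leq_trans (ltn_ord j) (leq_addr q r).
case: hV => hVo [hVrow [hVr [nuV [hnuV [hsumV hsortV]]]]].
case: hY => hYo [hYcol [hYr [nuY [hnuY [hsumY hsortY]]]]].
have hVn := hnear_on Omega hOmega hlam0 hVo.
have hYn := hnear_on Omega hOmega hlam0 hYo.
have hV0 : V lam0 *m T lam0 = 0.
  by apply/row_matrixP => i; rewrite row_mul (hVrow i).2 row0.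
have hY0 : T lam0 *m Y lam0 = 0.
  apply: trmx_inj; rewrite trmx_mul trmx0; apply/row_matrixP => j.
  by rewrite row_mul -tr_col -trmx_mul (hYcol j).2 trmx0 row0.
split.
  exact: (@core R lam0 r q T UL UR m V Y nuV hm0 hmr hUL hUR hsmith hVn hYn hV0 hY0 hVr hYr hnuV hsumV hsortV).
have hS' : \forall z \near lam0,
    (UR z)^T *m (T z)^T *m (UL z)^T = powdiag (r + q) lam0 m z.
  by apply: filterS hsmith => z e; rewrite -!trmx_mul mulmxA e /powdiag tr_diag_mx.
have hnu' : forall i : 'I_r,
    zero_order lam0 (fun z => row i ((Y z)^T) *m (T z)^T) (nuY i).
  move=> i.
  have -> : (fun z => row i ((Y z)^T) *m (T z)^T) = (fun z => (T z *m col i (Y z))^T).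
    by apply/funext => z; rewrite trmx_mul tr_col.
  exact: (@zero_order_tr R _ _ lam0 _ _ (hnuY i)).
have e1 : (Y lam0)^T *m (T lam0)^T = 0 by rewrite -trmx_mul hY0 trmx0.
have e2 : (T lam0)^T *m (V lam0)^T = 0 by rewrite -trmx_mul hV0 trmx0.
have e3 : \rank (Y lam0)^T = r by rewrite mxrank_tr.
have e4 : \rank (V lam0)^T = r by rewrite mxrank_tr.
have [M' [uM' EM']] := @core R lam0 r q (fun z => (T z)^T) (fun z => (UR z)^T)
  (fun z => (UL z)^T) m (fun z => (Y z)^T) (fun z => (V z)^T) nuY hm0 hmr
  (unimod_tr hUR) (unimod_tr hUL) hS' (hnear_tr hYn) (hnear_tr hVn)
  e1 e2 e3 e4 hnu' hsumY hsortY.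
exists (fun z => (M' z)^T); split; first exact: unimod_tr.
apply: filterS EM' => z ->.
rewrite trmx_mul trmx_inv /powdiag tr_diag_mx !trmx_mul !trmxK.
by rewrite mulmxA.
Qed.
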